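(* Consider a finite set $\mathcal{U}$ of users with traffic demands $T_u>0$ and attenuations $\ell_u>0$, constants $g,N_0,\Gamma>0$ and a total bandwidth $W>0$. Consider minimizing $\sum_{u\in\mathcal{U}}\frac{gN_0\Gamma}{\ell_u}\left(2^{T_u/w_u}-1\right)w_u$ over $w_u>0$ subject to $\sum_{u\in\mathcal{U}}w_u=W$, with Lagrangian $\Lambda=\sum_{u}\frac{gN_0\Gamma}{\ell_u}(2^{T_u/w_u}-1)w_u+\lambda\left(\sum_u w_u-W\right)$. The Lagrange multiplier $\lambda^*$ of a stationary point of $\Lambda$ (i.e. $\partial\Lambda/\partial w_u=0$ for all $u$ and $\partial\Lambda/\partial\lambda=0$) is a solution of $f(\lambda^* )=0$, where $$f(\lambda)=W-\sum_{u\in\mathcal{U}}\frac{T_u\ln 2}{1+W_0\!\left(\frac{1}{e}\left[\frac{\lambda\ell_u}{gN_0\Gamma}-1\right]\right)}$$ is a monotonic function of $\lambda$, and $\lambda^*$ lies in the closed interval $$\left(ze^{z+1}+1\right)\frac{gN_0\Gamma}{\ell_m}\le\lambda^*\le\left(ze^{z+1}+1\right)\frac{gN_0\Gamma}{\ell_M},\qquad z\triangleq\frac{\ln 2}{W}\sum_{u\in\mathcal{U}}T_u-1,$$ where $\ell_m=\max_u\ell_u$ and $\ell_M=\min_u\ell_u$.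
   Context: $W_0$ denotes the principal branch of the real Lambert W function, i.e. for $y\ge -1/e$, $x=W_0(y)$ is the solution $x\ge -1$ of $y=xe^x$. In the paper's terminology, $\ell_m$ is the attenuation of users closest to the base station (''minimum attenuation'', largest gain) and $\ell_M$ that of cell-edge users, with $\ell_m>\ell_M$. *)

(* Defs.v *)
From HB Require Import structures.
From mathcomp Require Import all_boot all_order all_algebra.
From mathcomp Require Import all_classical all_reals all_analysis.
Set Implicit Arguments. Unset Strict Implicit. Unset Printing Implicit Defensive.
Import Order.TTheory GRing.Theory Num.Theory.
Local Open Scope classical_set_scope.
Local Open Scope ring_scope.

(* Principal branch of the real Lambert W function: for y >= -1/e,
   W0 y is the (unique) x >= -1 with x * e^x = y.  (Junk value 0 otherwise.) *)
Definition LambertW0 {R : realType} (y : R) : R :=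
  xget 0 [set x : R | -1 <= x /\ x * expR x = y].

Definition upd {U : finType} {R : realType} (w : U -> R) (u : U) (t : R) : U -> R :=
  fun v => if v == u then t else w v.

Definition Lagr {U : finType} {R : realType} (g N0 Gam W : R) (T l : U -> R)
  (w : U -> R) (lam : R) : R :=
  \sum_(u : U) (g * N0 * Gam / l u) * (2 `^ (T u / w u) - 1) * w u
  + lam * (\sum_(u : U) w u - W).

Definition fL {U : finType} {R : realType} (g N0 Gam W : R) (T l : U -> R)
  (lam : R) : R :=
  W - \sum_(u : U) T u * ln 2 /
        (1 + LambertW0 (expR (-1) * (lam * l u / (g * N0 * Gam) - 1))).

(* Main.v *)
Require Import Defs.
From HB Require Import structures.
From mathcomp Require Import all_boot all_order all_algebra.
From mathcomp Require Import all_classical all_reals all_analysis.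
From mathcomp Require Import ring lra.
Set Implicit Arguments. Unset Strict Implicit.
Import Order.TTheory GRing.Theory Num.Theory.
Local Open Scope classical_set_scope.
Local Open Scope ring_scope.
Lemma dterm (R : realType) (c T t0 : R) : 0 < t0 ->
  is_derive t0 1 (fun t => c * ((2 `^ (T/t) - 1) * t))
   (c * ((2 `^ (T/t0) - 1) - 2 `^ (T/t0) * ln 2 * T / t0)).
Proof.
move=> t0p.
have h1 : is_derive t0 1 (fun t : R => t^-1) ((- t0 ^- 2) *: (1:R)).
  by apply: is_deriveV => //; rewrite gt_eqF.
have h2 := is_deriveZ (T * ln 2) h1.
have h3 := is_derive1_comp (is_derive_expR _) h2.
have h4 := is_deriveB h3 (is_derive_cst (1:R) t0 1).
have h5 := is_deriveM h4 (is_derive_id t0 1).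
have h6 := is_deriveZ c h5.
have E : (fun t : R => c * ((2 `^ (T/t) - 1) * t)) =
  (c \*: (((expR \o ((T * ln 2) \*: (fun t : R => t^-1))) - cst 1) * id)).
  apply/funext => t /=; rewrite /powR ifF; last by rewrite pnatr_eq0.
  by rewrite /= mulrAC.
rewrite E; apply: is_derive_eq h6 _.
rewrite /powR ifF; last by rewrite pnatr_eq0.
rewrite /= subr0. rewrite /GRing.scale /=. rewrite !mulr1 (mulrAC T). have t0n : t0 != 0 by rewrite gt_eqF. rewrite (_ : (expR \o _ - cst 1) t0 = expR (T / t0 * ln 2) - 1); last by rewrite /= mulrAC. set e := expR _. by field.
Qed.
Section W0.
Variable R : realType.
Import numFieldNormedType.Exports.
Implicit Types a b x y : R.

Lemma hmono a b : -1 <= a -> a < b -> a * expR a < b * expR b.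
Proof.
move=> a1 ab.
have Ea := expR_gt0 a; have Eb := expR_gt0 b.
have dn : b - a != 0 by rewrite subr_eq0 gt_eqF.
have dn' : - (b - a) != 0 by rewrite oppr_eq0.
case: (lerP 0 b) => b0.
  have H := expR_gt1Dx dn.
  have eb : expR b = expR a * expR (b - a) by rewrite -expRD; congr expR; ring.
  have H2 : b * (1 + (b - a)) <= b * expR (b - a) by rewrite ler_wpM2l // ltW.
  have H3 : a < b * expR (b - a) by nra.
  by rewrite eb mulrCA (mulrC a) ltr_pM2l.
have H := expR_gt1Dx dn'.
have ea : expR a = expR b * expR (- (b - a)) by rewrite -expRD; congr expR; ring.
have a0 : a < 0 by exact: lt_trans ab b0.
have H2 : a * expR (- (b - a)) < a * (1 + - (b - a)) by rewrite ltr_nM2l.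
have H3 : a * expR (- (b - a)) < b by nra.
by rewrite ea mulrCA (mulrC b) ltr_pM2l.
Qed.

Lemma hmono_le a b : -1 <= a -> a <= b -> a * expR a <= b * expR b.
Proof.
move=> a1; rewrite le_eqVlt => /orP [/eqP -> //|ab].
exact/ltW/hmono.
Qed.

Lemma hmono_rev a b : -1 <= a -> -1 <= b -> a * expR a <= b * expR b -> a <= b.
Proof.
move=> a1 b1 H; rewrite leNgt; apply/negP => ba.
by have := hmono b1 ba; rewrite ltNge H.
Qed.

Lemma W0_eq x : -1 <= x -> LambertW0 (x * expR x) = x.
Proof.
move=> x1; rewrite /LambertW0; apply: xget_unique => //= y [y1 Hy].
apply/eqP; rewrite eq_le; apply/andP; split; apply: hmono_rev => //; by rewrite Hy.
Qed.

Lemma W0_ex y : - expR (-1) <= y -> exists x, -1 <= x /\ x * expR x = y.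
Proof.
move=> y1.
have b1 : -1 <= `|y| by apply: le_trans (normr_ge0 _); rewrite lerN10.
have := @IVT R (fun x => x * expR x) (-1) `|y| y b1.
case.
- have C : continuous (fun x : R => x * expR x).
    move=> x; apply: continuousM => //; exact: continuous_expR.
  apply/continuous_subspaceT. exact: C.
- rewrite /= expRN mulN1r.
  have H1 : y <= `|y| * expR `|y|.
    apply: le_trans (ler_norm y) _.
    rewrite -{1}(mulr1 `|y|) ler_wpM2l //.
    by rewrite -expR0 ler_expR.
  have H0 : - expR (-1) <= `|y| * expR `|y| by apply: le_trans H1.
  rewrite expRN in y1.
  by rewrite ge_min y1 /= le_max H1 orbT.
- move=> x; rewrite in_itv /= => /andP [x1 _] H; by exists x.
Qed.

Lemma W0_spec y : - expR (-1) <= y ->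
  -1 <= LambertW0 y /\ LambertW0 y * expR (LambertW0 y) = y.
Proof. by move/W0_ex => E; apply: (@xgetPex _ 0 _ E). Qed.

Lemma W0_gt y : - expR (-1) < y -> -1 < LambertW0 y.
Proof.
move=> y1; have [H1 H2] := W0_spec (ltW y1).
rewrite lt_neqAle H1 andbT; apply/negP => /eqP E.
by move: y1; rewrite -H2 -E mulN1r ltxx.
Qed.

Lemma W0_le a b : - expR (-1) <= a -> a <= b -> LambertW0 a <= LambertW0 b.
Proof.
move=> a1 ab; have b1 := le_trans a1 ab.
have [A1 A2] := W0_spec a1; have [B1 B2] := W0_spec b1.
by apply: hmono_rev => //; rewrite A2 B2.
Qed.
End W0.
Unset Implicit Arguments.

Theorem lemma1 (R : realType) (U : finType) (g N0 Gam W : R) (T l : U -> R)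
  (lm lM : R) (w : U -> R) (lam : R) :
  0 < g -> 0 < N0 -> 0 < Gam -> 0 < W ->
  (forall u, 0 < T u) -> (forall u, 0 < l u) ->
  (* lm = max_u l_u, lM = min_u l_u *)
  (exists u, l u = lm) -> (forall u, l u <= lm) ->
  (exists u, l u = lM) -> (forall u, lM <= l u) ->
  (* (w, lam) is a stationary point of the Lagrangian with w_u > 0 *)
  (forall u, 0 < w u) ->
  (forall u, derive1 (fun t => Lagr g N0 Gam W T l (upd w u t) lam) (w u) = 0) ->
  derive1 (fun m => Lagr g N0 Gam W T l w m) lam = 0 ->
  let z := ln 2 / W * (\sum_(u : U) T u) - 1 in
  fL g N0 Gam W T l lam = 0 /\
  ((forall x y, 0 < x -> x <= y -> fL g N0 Gam W T l x <= fL g N0 Gam W T l y) \/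
   (forall x y, 0 < x -> x <= y -> fL g N0 Gam W T l y <= fL g N0 Gam W T l x)) /\
  (z * expR (z + 1) + 1) * (g * N0 * Gam / lm) <= lam /\
  lam <= (z * expR (z + 1) + 1) * (g * N0 * Gam / lM).
Proof.
move=> g0 N00 Gam0 W0 T0 l0 [um lmE] lmH [uM lME] lMH w0 Dw Dl z.
have c0 : 0 < g * N0 * Gam by rewrite !mulr_gt0.
set c := g * N0 * Gam in c0 *.
have ln20 : 0 < ln (2:R) by apply: ln_gt0; rewrite ltr1n.
have sumw : \sum_(u : U) w u = W.
  pose S := \sum_(u : U) c / l u * (2 `^ (T u / w u) - 1) * w u.
  have E : (fun m => Lagr g N0 Gam W T l w m) = cst S + (@id R) * cst (\sum_(u : U) w u - W).
    by apply/funext => m /=.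
  have H := is_deriveD (is_derive_cst S lam 1) (is_deriveM (is_derive_id lam 1) (is_derive_cst (\sum_(u : U) w u - W) lam 1)).
  move: Dl; rewrite derive1E E derive_val /= /GRing.scale /= mulr0 !add0r mulr1.
  by move/eqP; rewrite subr_eq0 => /eqP.
have stat u : c / l u * ((2 `^ (T u / w u) - 1) - 2 `^ (T u / w u) * ln 2 * T u / w u) + lam = 0.
  pose A := \sum_(v | v != u) c / l v * (2 `^ (T v / w v) - 1) * w v.
  pose B := \sum_(v | v != u) w v.
  have E : (fun t => Lagr g N0 Gam W T l (upd w u t) lam) =
     (fun t => (c / l u) * ((2 `^ (T u / t) - 1) * t)) + lam \*: (@id R) + cst (A + lam * (B - W)).
    apply/funext => t /=; rewrite /Lagr (bigD1 u) //= (bigD1 u (P := xpredT)) //=.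
    rewrite /upd eqxx.
    rewrite (eq_bigr (fun v => c / l v * (2 `^ (T v / w v) - 1) * w v)); last first.
      by move=> v /negbTE ->.
    rewrite (eq_bigr (fun v => w v)); last by move=> v /negbTE ->.
    rewrite -/A -/B -/c !fctE; change (lam *: t) with (lam * t); rewrite mulrA; set X := _ * t; rewrite mulrDr mulrBr mulrDr; rewrite -!addrA; congr (_ + _); rewrite addrC -!addrA; congr (_ + _). rewrite mulrN addrCA addrA addrC; congr (_ + _); exact: addrC.
  have H := is_deriveD (is_deriveD (dterm (c / l u) (T u) (w0 u)) (is_deriveZ lam (is_derive_id (w u) 1))) (is_derive_cst (A + lam * (B - W)) (w u) 1).
  move: (Dw u); rewrite derive1E E derive_val /= /GRing.scale /= mulr1 addr0.
  by [].
pose y u := T u * ln 2 / w u - 1.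
have y1 u : -1 < y u.
  have : 0 < T u * ln 2 / w u by apply: divr_gt0 (w0 u); exact: mulr_gt0.
  rewrite /y; lra.
have yE u : y u + 1 = T u * ln 2 / w u by rewrite /y subrK.
have P u : 2 `^ (T u / w u) = expR (y u + 1).
  by rewrite yE /powR ifF ?pnatr_eq0 // mulrAC.
have lamE u : lam = c / l u * (y u * expR (y u + 1) + 1).
  have := stat u; rewrite P.
  have -> : expR (y u + 1) * ln 2 * T u / w u = expR (y u + 1) * (y u + 1).
    by rewrite yE -!mulrA; congr (_ * _); exact: mulrCA.
  set k := c / l u; set E := expR _; set Y := y u.
  move=> H; apply/eqP; rewrite -subr_eq0 -H; apply/eqP; ring.
have W0y u : LambertW0 (expR (-1) * (lam * l u / c - 1)) = y u.
  have -> : lam * l u / c - 1 = y u * expR (y u + 1).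
    rewrite {1}(lamE u); have lu := l0 u; field.
    by apply/andP; split; rewrite gt_eqF.
  have e : expR (-1) * expR 1 = 1 :> R by rewrite -expRD addNr expR0.
  rewrite expRD.
  have -> : expR (-1) * (y u * (expR (y u) * expR 1)) = y u * expR (y u) * (expR (-1) * expR 1) by ring.
  rewrite e mulr1.
  exact/W0_eq/ltW.
have term u : T u * ln 2 / (1 + LambertW0 (expR (-1) * (lam * l u / c - 1))) = w u.
  by rewrite W0y addrC yE invf_div mulrCA divff ?mulr1 // gt_eqF // mulr_gt0.
split.
  rewrite /fL -/c (eq_bigr _ (fun u _ => term u)) sumw; exact: subrr.
split.
  left => x x' x0 xx'.
  rewrite /fL -/c lerD2l lerN2; apply: ler_sum => u _.
  set a := expR (-1) * (x * l u / c - 1); set b := expR (-1) * (x' * l u / c - 1).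
  have e0 := expR_gt0 (-1 : R).
  have xl : 0 < x * l u / c by rewrite divr_gt0 // mulr_gt0.
  have ha : - expR (-1) < a by have := mulr_gt0 e0 xl; rewrite /a mulrBr mulr1; lra.
  have ab : a <= b.
    rewrite /a /b ler_wpM2l ?(ltW e0) // lerD2r ler_wpM2r ?invr_ge0 ?(ltW c0) //.
    by rewrite ler_wpM2r // ltW.
  have Da : 0 < 1 + LambertW0 a by rewrite -ltrBlDl sub0r; exact: W0_gt.
  have Db : 0 < 1 + LambertW0 b by apply: lt_le_trans Da _; rewrite lerD2l; exact: W0_le (ltW ha) ab.
  rewrite ler_pM2l ?mulr_gt0 // lef_pV2 ?posrE // lerD2l; exact: W0_le (ltW ha) ab.
have ST : 0 < \sum_(u : U) T u.
  rewrite (bigD1 um) //=; have := T0 um.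
  have : 0 <= \sum_(v | v != um) T v by apply: sumr_ge0 => v _; exact: ltW.
  lra.
have zW : (z + 1) * W = ln 2 * \sum_(u : U) T u.
  by rewrite /z subrK mulrAC -mulrA mulrA divfK // gt_eqF.
have hz : -1 < z.
  have : 0 < ln 2 / W * \sum_(u : U) T u by rewrite mulr_gt0 // divr_gt0.
  rewrite /z; lra.
have hm (a b : R) : -1 <= a -> a <= b -> a * expR (a + 1) <= b * expR (b + 1).
  move=> a1 ab; rewrite !expRD !mulrA; apply: ler_wpM2r; first exact: expR_ge0.
  exact: hmono_le.
have Hz0 : 0 <= z * expR (z + 1) + 1.
  have := hm (-1) z (lexx _) (ltW hz); rewrite addNr expR0 mulr1; lra.
have ex1 : exists u, z <= y u.
  apply: contrapT => /forallNP H.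
  have H' v : T v * ln 2 < (z + 1) * w v.
    by rewrite -ltr_pdivrMr // -yE ltrD2r ltNge; apply/negP; exact: H.
  have S1 : \sum_(v : U) T v * ln 2 < \sum_(v : U) (z + 1) * w v.
    rewrite (bigD1 um) //= [X in _ < X](bigD1 um) //=; apply: ltr_leD; first exact: H'.
    by apply: ler_sum => v _; exact: ltW.
  move: S1; rewrite -mulr_suml -mulr_sumr sumw zW; lra.
have ex2 : exists u, y u <= z.
  apply: contrapT => /forallNP H.
  have H' v : (z + 1) * w v < T v * ln 2.
    by rewrite -ltr_pdivlMr // -yE ltrD2r ltNge; apply/negP; exact: H.
  have S1 : \sum_(v : U) (z + 1) * w v < \sum_(v : U) T v * ln 2.
    rewrite (bigD1 um) //= [X in _ < X](bigD1 um) //=; apply: ltr_leD; first exact: H'.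
    by apply: ler_sum => v _; exact: ltW.
  move: S1; rewrite -mulr_suml -mulr_sumr sumw zW; lra.
have lm0 : 0 < lm by rewrite -lmE.
have lM0 : 0 < lM by rewrite -lME.
split.
  case: ex1 => u zu; rewrite (lamE u).
  apply: (@le_trans _ _ ((z * expR (z + 1) + 1) * (c / l u))).
    apply: ler_wpM2l => //; apply: ler_wpM2l; first exact: ltW.
    by rewrite lef_pV2 ?posrE.
  rewrite [X in _ <= X]mulrC; apply: ler_wpM2r; first by apply: divr_ge0; [exact: ltW| exact: ltW].
  by rewrite lerD2r; apply: hm => //; exact: ltW.
case: ex2 => u zu; rewrite (lamE u).
apply: (@le_trans _ _ ((z * expR (z + 1) + 1) * (c / l u))).
  rewrite [X in X <= _]mulrC; apply: ler_wpM2r; first by apply: divr_ge0; [exact: ltW| exact: ltW].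
  by rewrite lerD2r; apply: hm => //; exact: ltW.
apply: ler_wpM2l => //; apply: ler_wpM2l; first exact: ltW.
by rewrite lef_pV2 ?posrE.
Qed.
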